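(* Let $t\ge1$, $k\ge1$, $N\ge1$ with $\log k\le N/(4t)$. Let $A^1,\dots,A^k$ be (jointly distributed) random variables, each taking values in $\{0,1\}^N$, such that $\max_{a^1,\dots,a^k}\Pr[A^1\cdots A^k=a^1\cdots a^k]\le2^{-Nk/t}$. Then $$\Pr\Big[\big|\{A^1,\dots,A^k\}\big|\le\tfrac{k}{2t}\Big]\le2^{-Nk/(4t)},$$ i.e., the probability that $A^1,\dots,A^k$ take at most $k/(2t)$ distinct values is at most $2^{-Nk/(4t)}$.
   Context: Logarithms are base 2. *)

(* Defs.v *)
From mathcomp Require Import all_boot all_order all_algebra.
From mathcomp Require Import all_classical all_reals all_analysis.
Set Implicit Arguments. Unset Strict Implicit. Unset Printing Implicit Defensive.
Import Order.TTheory GRing.Theory Num.Theory.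
Local Open Scope ring_scope.

(* An outcome of (A^1,...,A^k): a k-indexed family of N-bit strings. *)
Definition outcome (k N : nat) := {ffun 'I_k -> {ffun 'I_N -> bool}}.

Definition is_pmf (R : realType) (T : finType) (P : {ffun T -> R}) : Prop :=
  (forall x, 0 <= P x) /\ \sum_(x : T) P x = 1.

Definition prob (R : realType) (T : finType) (P : {ffun T -> R}) (E : pred T) : R :=
  \sum_(x : T | E x) P x.

Definition ndistinct (k N : nat) (a : outcome k N) : nat :=
  #|[set a i | i : 'I_k]|.

Definition log2 (R : realType) (x : R) : R := ln x / ln 2.

(* Main.v *)
Require Import Defs.
From mathcomp Require Import all_boot all_order all_algebra.
From mathcomp Require Import all_classical all_reals all_analysis.
From mathcomp Require Import ring lra.
Import Order.TTheory GRing.Theory Num.Theory.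
Local Open Scope ring_scope.

Section Count.
Variables (k N m : nat).
Definition word := {ffun 'I_N -> bool}.
Definition gmap (p : {ffun 'I_k -> 'I_m} * {ffun 'I_m -> word}) : outcome k N :=
  [ffun i => p.2 (p.1 i)].

Lemma count_small (E : pred (outcome k N)) :
  (forall a, E a -> ndistinct a <= m)%N ->
  (#|E| <= m ^ k * (2 ^ N) ^ m)%N.
Proof.
move=> hE.
have sub : {subset E <= codom gmap}.
  move=> a /hE ha.
  set S := [set a i | i : 'I_k].
  have hS : forall i, (index (a i) (enum S) < m)%N.
    move=> i; apply: leq_trans ha.
    rewrite /ndistinct -/S cardE index_mem mem_enum.
    by apply/imsetP; exists i.
  pose f : {ffun 'I_k -> 'I_m} := [ffun i => Ordinal (hS i)].
  pose w : {ffun 'I_m -> word} := [ffun j : 'I_m => nth [ffun=> false] (enum S) j].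
  apply/codomP; exists (f, w); apply/ffunP => i.
  rewrite /gmap !ffunE /= nth_index // mem_enum.
  by apply/imsetP; exists i.
have h1 := subset_leq_card (introT fintype.subsetP sub).
have h2 := card_size (codom gmap).
apply: (leq_trans h1); apply: (leq_trans h2).
rewrite size_codom card_prod !card_ffun !card_ord.
by rewrite card_bool.
Qed.
End Count.

Theorem mainTheorem18 (R : realType) (t : R) (k N : nat)
  (ht : 1 <= t) (hk : (1 <= k)%N) (hN : (1 <= N)%N)
  (hlog : log2 (k%:R : R) <= N%:R / (4 * t))
  (P : {ffun outcome k N -> R}) (hP : is_pmf P)
  (hmax : forall a : outcome k N, P a <= 2 `^ (- (N%:R * k%:R / t))) :
  prob P (fun a => (ndistinct a)%:R <= k%:R / (2 * t))
    <= 2 `^ (- (N%:R * k%:R / (4 * t))).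
Proof.
set E : pred (outcome k N) := fun a => (ndistinct a)%:R <= k%:R / (2 * t).
set c := 2 `^ (- (N%:R * k%:R / t)).
have t0 : 0 < t by apply: lt_le_trans ht.
have kt0 : 0 <= k%:R / (2 * t) :> R by apply: divr_ge0 => //; rewrite mulr_ge0 // ltW.
set m := (\max_(a | E a) ndistinct a)%N.
have hmR : m%:R <= k%:R / (2 * t).
  rewrite /m; apply: (big_ind (fun x : nat => x%:R <= k%:R / (2 * t))) => //.
  by move=> x y hx hy; case: (leqP x y) => h; rewrite ?(maxn_idPr h) ?(maxn_idPl (ltnW h)).
have hmk : (m <= k)%N.
  rewrite /m; apply: (big_ind (fun x : nat => x <= k)%N) => //.
    by move=> x y hx hy; rewrite geq_max hx hy.
  move=> a _; rewrite /ndistinct.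
  by apply: leq_trans (leq_imset_card _ _) _; rewrite card_ord.
have hEm : forall a, E a -> (ndistinct a <= m)%N by move=> a ha; apply: leq_bigmax_cond.
have hcard := @count_small k N m E hEm.
have hcard2 : (#|E| <= k ^ k * 2 ^ (N * m))%N.
  apply: leq_trans hcard _; rewrite -expnM; apply: leq_mul => //.
  by rewrite leq_exp2r.
have ln2 : 0 < ln (2 : R) by apply: ln_gt0; rewrite ltr1n.
have hkpow : k%:R = 2 `^ log2 (k%:R : R) :> R.
  rewrite /powR pnatr_eq0 /= /log2 mulfVK ?gt_eqF // lnK //.
  by rewrite posrE ltr0n.
have c0 : 0 <= c by apply: powR_ge0.
have step1 : prob P E <= #|E|%:R * c.
  rewrite /prob; apply: le_trans (_ : \sum_(x | E x) c <= _).
    by apply: ler_sum => x _; apply: hmax.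
  by rewrite sumr_const [X in _ <= X]mulr_natl.
apply: (le_trans step1).
have step2 : #|E|%:R <= 2 `^ (log2 (k%:R : R) * k%:R + (N * m)%:R) :> R.
  apply: le_trans (_ : (k ^ k * 2 ^ (N * m))%:R <= _); first by rewrite ler_nat.
  rewrite natrM !natrX powRD; last by rewrite pnatr_eq0 implybT.
  rewrite powRrM powR_mulrn ?powR_ge0 // -hkpow powR_mulrn //.
have ex1 : log2 (k%:R : R) * k%:R <= N%:R / (4 * t) * k%:R by apply: ler_wpM2r.
have ex2 : (N * m)%:R <= N%:R * (k%:R / (2 * t)) :> R by rewrite natrM; apply: ler_wpM2l.
have id : N%:R / (4 * t) * k%:R + N%:R * (k%:R / (2 * t)) - N%:R * k%:R / t
   = - (N%:R * k%:R / (4 * t)) :> R by field; rewrite ?mulf_neq0 ?gt_eqF // ?pnatr_eq0.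
apply: le_trans (_ : 2 `^ (log2 (k%:R : R) * k%:R + (N * m)%:R) * c <= _).
  by apply: ler_wpM2r.
rewrite /c -powRD; last by rewrite pnatr_eq0 implybT.
apply: ler_powR; first by rewrite ler1n.
lra.
Qed.
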